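(* Let $K_1=\overline{1}$ and, for $j\ge1$, let $K_{j+1}$ be the periodic sequence whose repeating block is obtained by writing the repeating block of $K_j$ twice and replacing the last symbol by its complement. For $s=s_1s_2\dots\in\{0,1\}^{\mathbb N}$ let $\tau(s)=\sum_{k\ge1}t_k2^{-k}$ with $t_k=\sum_{i=1}^k s_i\pmod 2$, and put $\tau_j=\tau(K_j)$. Then for every $j\ge1$, $$\tau_j=\frac{p_j}{q_j},\qquad q_j=2^{2^{j-1}}+1,\qquad p_j=2^{2^{j-1}}+1-\prod_{k=0}^{j-2}\bigl(2^{2^k}-1\bigr),$$ this fraction is in lowest terms, and equivalently $$\tau_j=1-\frac{\prod_{k=0}^{j-2}(2^{2^k}-1)}{2^{2^{j-1}}+1}=1-\frac{\prod_{k=0}^{j-1}(1-2^{-2^k})}{2(1-2^{-2^j})}.$$ Moreover $p_1=2,q_1=3$ and $p_{j+1}=2+(2^{2^{j-1}}-1)p_j$, $q_{j+1}=2+(2^{2^{j-1}}-1)q_j$ for $j\ge1$.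
   Context: The empty product equals $1$. For example $\tau_1=2/3$, $\tau_2=4/5$, $\tau_3=14/17$, $\tau_4=212/257$. *)

(* Defs.v *)
From Stdlib Require Import Reals ZArith List Bool.
From Coquelicot Require Import Coquelicot.
Import ListNotations.

(* Repeating block of K_j (j >= 1): K_1 = [1], K_{j+1} = block of K_j written
   twice with its last symbol complemented.  true = 1, false = 0. *)
Fixpoint block_aux (n : nat) : list bool :=
  match n with
  | O => [true]
  | S m => let b := block_aux m ++ block_aux m in
           removelast b ++ [negb (last b false)]
  end.

Definition block (j : nat) : list bool := block_aux (j - 1).

(* K_j as a sequence s_1 s_2 ... ; index i >= 1 (s 0 is unused) *)
Definition Kseq (j : nat) (i : nat) : bool :=
  nth ((i - 1) mod length (block j)) (block j) false.

Fixpoint parity (s : nat -> bool) (k : nat) : bool :=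
  match k with
  | O => false
  | S m => xorb (parity s m) (s (S m))
  end.

Definition b2R (b : bool) : R := if b then 1%R else 0%R.

Definition tau (s : nat -> bool) : R :=
  Series (fun n => b2R (parity s (S n)) / 2 ^ (S n)).

Definition tau_j (j : nat) : R := tau (Kseq j).

Definition prodZ (j : nat) : Z :=
  fold_right Z.mul 1%Z
    (map (fun k => (2 ^ (2 ^ Z.of_nat k)) - 1)%Z (seq 0 (j - 1))).

Definition qZ (j : nat) : Z := (2 ^ (2 ^ Z.of_nat (j - 1)) + 1)%Z.
Definition pZ (j : nat) : Z := (qZ j - prodZ j)%Z.

Definition prodR (j : nat) : R :=
  fold_right Rmult 1%R (map (fun k => 1 - / 2 ^ (2 ^ k))%R (seq 0 j)).

(* Main.v *)
Require Import Defs.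
From Stdlib Require Import Reals ZArith List Lra Lia Znumtheory Bool.
From Coquelicot Require Import Coquelicot.
Import ListNotations.
Open Scope R_scope.

Fixpoint Sv (b : list bool) (c : bool) : R :=
  match b with
  | [] => 0
  | x :: b' => b2R (xorb c x) / 2 + Sv b' (xorb c x) / 2
  end.

Fixpoint Xf (c : bool) (b : list bool) : bool :=
  match b with
  | [] => c
  | x :: b' => Xf (xorb c x) b'
  end.

Lemma b2R_neg y : b2R (negb y) = 1 - b2R y.
Proof. destruct y; simpl; lra. Qed.

Lemma Sv_neg b : forall c, Sv b (negb c) = 1 - / 2 ^ length b - Sv b c.
Proof.
  induction b as [|x b IH]; intro c; simpl.
  - field.
  - replace (xorb (negb c) x) with (negb (xorb c x)) by (destruct c, x; reflexivity).
    rewrite IH, b2R_neg. field. apply pow_nonzero; lra.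
Qed.

Lemma Xf_neg b : forall c, Xf (negb c) b = negb (Xf c b).
Proof.
  induction b as [|x b IH]; intro c; simpl; auto.
  replace (xorb (negb c) x) with (negb (xorb c x)) by (destruct c, x; reflexivity).
  apply IH.
Qed.

Lemma Xf_app b1 : forall b2 c, Xf c (b1 ++ b2) = Xf (Xf c b1) b2.
Proof. induction b1; simpl; auto. Qed.

Lemma Sv_app b1 : forall b2 c, Sv (b1 ++ b2) c = Sv b1 c + Sv b2 (Xf c b1) / 2 ^ length b1.
Proof.
  induction b1 as [|x b IH]; intros b2 c; simpl.
  - field.
  - rewrite IH. field. apply pow_nonzero. lra.
Qed.

Lemma fold_mulR l a : fold_right Rmult a l = a * fold_right Rmult 1 l.
Proof. induction l; simpl. ring. rewrite IHl. ring. Qed.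

Lemma prodR_S m : prodR (S m) = prodR m * (1 - / 2 ^ (2 ^ m)).
Proof.
  unfold prodR. rewrite seq_S, map_app, fold_right_app. simpl.
  rewrite fold_mulR. ring.
Qed.

Lemma block_step m : forall B, B = block_aux m -> B <> [] ->
  block_aux (S m) = B ++ removelast B ++ [negb (last B false)].
Proof.
  intros B HB Hn. simpl. rewrite <- HB.
  rewrite removelast_app by exact Hn.
  rewrite <- app_assoc. f_equal. f_equal. f_equal. f_equal.
  rewrite (app_removelast_last false Hn) at 2.
  rewrite app_assoc, !last_last. reflexivity.
Qed.

Lemma block_inv m : length (block_aux m) = (2 ^ m)%nat /\ Xf false (block_aux m) = true /\
  1 - Sv (block_aux m) false = prodR m / 2.
Proof.
  induction m as [|m IH].
  - simpl. unfold prodR. simpl. split; [reflexivity|split; [reflexivity|]]. unfold b2R. lra.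
  - destruct IH as [Hl [HX HS]].
    assert (Hn : block_aux m <> []). { intro E. rewrite E in Hl. simpl in Hl. pose proof (Nat.pow_nonzero 2 m). lia. }
    rewrite (block_step m _ eq_refl Hn).
    pose proof (app_removelast_last false Hn) as HB.
    revert Hl HX HS HB. generalize (block_aux m). intros B Hl HX HS HB.
    set (B0 := removelast B) in *. set (x := last B false) in *.
    clearbody B0 x. subst B. 
    rewrite length_app in Hl. simpl in Hl.
    rewrite Xf_app in HX. simpl in HX.
    rewrite Sv_app in HS. simpl in HS.
    rewrite !length_app, !Xf_app, !Sv_app. simpl. rewrite !Xf_app, !length_app. simpl. rewrite HX.
    change true with (negb false). rewrite Sv_neg, Xf_neg. simpl negb.
    rewrite prodR_S.
    replace (2 ^ S m)%nat with (2 ^ m + 2 ^ m)%nat by (simpl; lia).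
    rewrite <- Hl. split; [lia|].
    assert (P : 2 ^ length B0 <> 0) by (apply pow_nonzero; lra).
    replace (2 ^ (length B0 + 1)) with (2 * 2 ^ length B0) by (rewrite Nat.add_comm; reflexivity).
    destruct (Xf false B0), x; simpl in HX; try discriminate; simpl; split; try reflexivity.
    all: simpl in HS; unfold b2R in HS;
      replace (prodR m) with (2 * (1 - (Sv B0 false + (1 / 2 + 0 / 2) / 2 ^ length B0))) by lra;
      field; exact P.
Qed.
Fixpoint fs (f : nat -> R) (n : nat) : R :=
  match n with O => 0 | S n => fs f n + f n end.

Lemma fs_sum f n : sum_f_R0 f n = fs f (S n).
Proof. induction n; simpl. ring. rewrite IHn. simpl. ring. Qed.

Lemma fs_shift f n : fs f (S n) = f O + fs (fun k => f (S k)) n.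
Proof. induction n. simpl. ring. change (fs f (S (S n))) with (fs f (S n) + f (S n)). rewrite IHn. simpl. ring. Qed.

Lemma fs_ext f g n : (forall k, f k = g k) -> fs f n = fs g n.
Proof. intro H. induction n; simpl; auto. rewrite IHn, H. reflexivity. Qed.

Lemma fs_scal c f n : fs (fun k => c * f k) n = c * fs f n.
Proof. induction n; simpl. ring. rewrite IHn. ring. Qed.

Lemma prefix (s : nat -> bool) b : forall o,
  (forall i, (i < length b)%nat -> s (S (o + i)) = nth i b false) ->
  fs (fun n => b2R (parity s (o + S n)) / 2 ^ (S n)) (length b) = Sv b (parity s o).
Proof.
  induction b as [|x b IH]; intros o H. reflexivity.
  change (length (x :: b)) with (S (length b)). rewrite fs_shift. cbn [Sv].
  assert (Hx : s (S o) = x). { specialize (H O). rewrite Nat.add_0_r in H. apply H. simpl. lia. }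
  assert (Hpo : xorb (parity s o) x = parity s (S o)) by (simpl; rewrite Hx; reflexivity).
  rewrite Hpo.
  rewrite <- IH with (o := S o).
  - rewrite <- plus_n_Sm, Nat.add_0_r.
    rewrite <- (fs_ext (fun k => / 2 * (b2R (parity s (S o + S k)) / 2 ^ S k))).
    + rewrite fs_scal, pow_1. unfold Rdiv. ring.
    + intro k. replace (o + S (S k))%nat with (S o + S k)%nat by lia. cbn [pow]. field. apply pow_nonzero. lra.
  - intros i Hi. replace (S (S o + i)) with (S (o + S i)) by lia. apply (H (S i)). simpl. lia.
Qed.

Lemma parity_shift s L : (forall i, s (S i + L)%nat = s (S i)) ->
  forall k, parity s (k + L) = xorb (parity s k) (parity s L).
Proof.
  intros Hp k. induction k. simpl. reflexivity.
  simpl. rewrite IHk. change (S (k + L)) with (S k + L)%nat. rewrite Hp.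
  destruct (parity s k), (parity s L), (s (S k)); reflexivity.
Qed.

Lemma geom_half : is_series (fun k => / 2 ^ S k) 1.
Proof.
  assert (H := is_series_geom (/2)). 
  assert (H2 : Rabs (/2) < 1) by (rewrite Rabs_pos_eq; lra).
  specialize (H H2). apply (is_series_scal_l (/2)) in H.
  replace 1 with (scal (/2) (/ (1 - /2))). 2: { unfold scal; simpl; unfold mult; simpl. field. }
  eapply is_series_ext. 2: exact H. intro n. unfold scal; simpl; unfold mult; simpl.
  rewrite <- Rinv_pow by lra. rewrite <- Rinv_mult. reflexivity.
Qed.

Lemma tau_periodic (s : nat -> bool) (L : nat) (A : R) :
  (0 < L)%nat ->
  (forall i, s (S i + L)%nat = s (S i)) -> parity s L = true ->
  fs (fun n => b2R (parity s (S n)) / 2 ^ (S n)) L = A ->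
  tau s = (A + / 2 ^ L) / (1 + / 2 ^ L).
Proof.
  intros HL Hp HX HA. unfold tau.
  set (a := fun n => b2R (parity s (S n)) / 2 ^ (S n)).
  assert (Ea : ex_series a).
  { apply (ex_series_le a (fun k => / 2 ^ S k)). 2: { eexists; apply geom_half. }
    intro n. change (norm (a n)) with (Rabs (a n)). unfold a.
    assert (0 < / 2 ^ S n) by (apply Rinv_0_lt_compat, pow_lt; lra).
    destruct (parity s (S n)); simpl b2R; rewrite Rabs_pos_eq; try lra.
    }
  assert (Heq : Series a = A + / 2 ^ L * (1 - Series a)).
  { rewrite (Series_incr_n a L HL Ea) at 1.
  rewrite fs_sum. replace (S (Init.Nat.pred L)) with L by lia.
  unfold a at 1. rewrite HA. fold a.
  assert (E : forall k, a (L + k)%nat = / 2 ^ L * (/ 2 ^ S k - a k)).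
  { intro k. unfold a. replace (S (L + k)) with (S k + L)%nat by lia.
    rewrite (parity_shift s L Hp), HX. rewrite pow_add.
    destruct (parity s (S k)); simpl b2R; field; split; apply pow_nonzero; lra. }
  rewrite (Series_ext _ _ E), Series_scal_l, Series_minus; [| eexists; apply geom_half | exact Ea].
  rewrite (is_series_unique _ _ geom_half). reflexivity. }
  assert (0 < / 2 ^ L) by (apply Rinv_0_lt_compat, pow_lt; lra).
  set (T := Series a). set (u := / 2 ^ L).
  fold T in Heq. fold u in Heq. 
  assert (H1 : T * (1 + u) = A + u) by (rewrite Rmult_plus_distr_l; lra).
  rewrite <- H1. field. unfold u. lra.
Qed.

Lemma prefixX (s : nat -> bool) b : forall o,
  (forall i, (i < length b)%nat -> s (S (o + i)) = nth i b false) ->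
  parity s (o + length b) = Xf (parity s o) b.
Proof.
  induction b as [|x b IH]; intros o H. simpl. rewrite Nat.add_0_r. reflexivity.
  assert (Hx : s (S o) = x). { specialize (H O). rewrite Nat.add_0_r in H. apply H. simpl. lia. }
  cbn [Xf length]. replace (o + S (length b))%nat with (S o + length b)%nat by lia.
  rewrite IH. simpl. rewrite Hx. reflexivity.
  intros i Hi. replace (S (S o + i)) with (S (o + S i)) by lia. apply (H (S i)). simpl. lia.
Qed.

Lemma tau_block m : tau_j (S m) =
  (Sv (block_aux m) false + / 2 ^ (2 ^ m)) / (1 + / 2 ^ (2 ^ m)).
Proof.
  destruct (block_inv m) as [Hl [HX _]].
  unfold tau_j.
  assert (Hb : block (S m) = block_aux m) by (unfold block; f_equal; lia).
  set (B := block_aux m) in *.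
  assert (HL : (0 < length B)%nat) by (rewrite Hl; apply Nat.neq_0_lt_0, Nat.pow_nonzero; lia).
  assert (Hpre : forall i, (i < length B)%nat -> Kseq (S m) (S (0 + i)) = nth i B false).
  { intros i Hi. unfold Kseq. rewrite Hb. f_equal. replace (S (0 + i) - 1)%nat with i by lia.
    apply Nat.mod_small. exact Hi. }
  rewrite <- Hl.
  apply tau_periodic.
  - exact HL.
  - intro i. unfold Kseq. rewrite Hb. f_equal.
    replace (S i + length B - 1)%nat with (i + 1 * length B)%nat by lia.
    rewrite Nat.Div0.mod_add. f_equal. lia.
  - pose proof (prefixX _ _ 0 Hpre) as P. simpl in P. rewrite P. exact HX.
  - apply (prefix _ _ 0 Hpre).
Qed.

Lemma IZR_pow2 n : IZR (2 ^ (2 ^ Z.of_nat n)) = 2 ^ (2 ^ n).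
Proof.
  replace (2 ^ Z.of_nat n)%Z with (Z.of_nat (2 ^ n)) by (rewrite Nat2Z.inj_pow; reflexivity).
  rewrite <- pow_IZR. reflexivity.
Qed.

Lemma fold_mulZ l a : fold_right Z.mul a l = (a * fold_right Z.mul 1 l)%Z.
Proof. induction l; simpl. ring. rewrite IHl. ring. Qed.

Lemma prodZ_S m : prodZ (S (S m)) = (prodZ (S m) * (2 ^ (2 ^ Z.of_nat m) - 1))%Z.
Proof.
  unfold prodZ. replace (S (S m) - 1)%nat with (S m) by lia. replace (S m - 1)%nat with m by lia.
  rewrite seq_S, map_app, fold_right_app. simpl. rewrite fold_mulZ. ring.
Qed.

Lemma qZ_S m : qZ (S m) = (2 ^ (2 ^ Z.of_nat m) + 1)%Z.
Proof. unfold qZ. replace (S m - 1)%nat with m by lia. reflexivity. Qed.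

Lemma IZR_prodZ m : 2 * IZR (prodZ (S m)) = 2 ^ (2 ^ m) * prodR m.
Proof.
  induction m.
  - unfold prodZ, prodR. simpl. ring.
  - rewrite prodZ_S, mult_IZR, minus_IZR, IZR_pow2, prodR_S.
    replace (2 ^ (2 ^ S m)) with (2 ^ (2 ^ m) * 2 ^ (2 ^ m)) by (rewrite <- pow_add; f_equal; simpl; lia).
    replace (2 * (IZR (prodZ (S m)) * (2 ^ 2 ^ m - 1))) with ((2 * IZR (prodZ (S m))) * (2 ^ 2 ^ m - 1)) by ring.
    rewrite IHm. field. apply pow_nonzero. lra.
Qed.

Lemma pow2_pos n : (0 < 2 ^ Z.of_nat n)%Z.
Proof. apply Z.pow_pos_nonneg; lia. Qed.

Lemma div_chain k m : (k <= m)%nat ->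
  (2 ^ (2 ^ Z.of_nat k) - 1 | 2 ^ (2 ^ Z.of_nat m) - 1)%Z.
Proof.
  induction 1. apply Z.divide_refl.
  eapply Z.divide_trans. exact IHle.
  exists (2 ^ (2 ^ Z.of_nat m) + 1)%Z.
  rewrite Nat2Z.inj_succ, Z.pow_succ_r by lia.
  rewrite Z.mul_comm, Z.pow_mul_r by (try lia; apply Z.lt_le_incl, pow2_pos).
  rewrite Z.pow_2_r. ring.
Qed.

Lemma coprime_factor k m : (k < m)%nat ->
  rel_prime (2 ^ (2 ^ Z.of_nat k) - 1) (qZ (S m)).
Proof.
  intro Hkm. rewrite qZ_S. apply bezout_rel_prime.
  destruct (div_chain k m ltac:(lia)) as [t Ht].
  set (e := (2 ^ Z.of_nat k)%Z) in *.
  assert (He : (0 < e)%Z) by apply pow2_pos.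
  set (u := (2 ^ (e - 1))%Z).
  assert (Hu : (2 ^ e = 2 * u)%Z).
  { unfold u. rewrite <- Z.pow_succ_r by lia. f_equal. lia. }
  rewrite Hu in *.
  apply Bezout_intro with (u := (- u * t - 1)%Z) (v := u).
  assert (E : (2 ^ 2 ^ Z.of_nat m + 1 = t * (2 * u - 1) + 2)%Z) by lia.
  rewrite E. ring.
Qed.

Lemma coprime_prod m : rel_prime (prodZ (S m)) (qZ (S m)).
Proof.
  unfold prodZ. replace (S m - 1)%nat with m by lia.
  assert (H : forall x, In x (map (fun k => (2 ^ (2 ^ Z.of_nat k)) - 1)%Z (seq 0 m)) ->
             rel_prime x (qZ (S m))).
  { intros x Hx. apply in_map_iff in Hx. destruct Hx as [k [<- Hk]].
    apply in_seq in Hk. apply coprime_factor. lia. }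
  revert H. generalize (map (fun k => (2 ^ (2 ^ Z.of_nat k)) - 1)%Z (seq 0 m)).
  intros l H. induction l; simpl.
  - apply rel_prime_1.
  - apply rel_prime_sym, rel_prime_mult; apply rel_prime_sym.
    + apply H. left. reflexivity.
    + apply IHl. intros. apply H. right. assumption.
Qed.

Lemma qZ_SS m : qZ (S (S m)) = (2 ^ (2 ^ Z.of_nat m) * 2 ^ (2 ^ Z.of_nat m) + 1)%Z.
Proof.
  rewrite qZ_S. f_equal.
  rewrite Nat2Z.inj_succ, Z.pow_succ_r by lia.
  rewrite Z.mul_comm, Z.pow_mul_r by (try lia; apply Z.lt_le_incl, pow2_pos).
  rewrite Z.pow_2_r. reflexivity.
Qed.

Lemma main_aux :
  (forall j : nat, (1 <= j)%nat ->
     tau_j j = (IZR (pZ j) / IZR (qZ j))%R /\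
     Z.gcd (pZ j) (qZ j) = 1%Z /\
     tau_j j = (1 - IZR (prodZ j) / IZR (qZ j))%R /\
     tau_j j = (1 - prodR j / (2 * (1 - / 2 ^ (2 ^ j))))%R) /\
  pZ 1 = 2%Z /\ qZ 1 = 3%Z /\
  (forall j : nat, (1 <= j)%nat ->
     pZ (S j) = (2 + (2 ^ (2 ^ Z.of_nat (j - 1)) - 1) * pZ j)%Z /\
     qZ (S j) = (2 + (2 ^ (2 ^ Z.of_nat (j - 1)) - 1) * qZ j)%Z).
Proof.
  split; [|split; [reflexivity|split; [reflexivity|]]].
  - intros j Hj. destruct j as [|m]; [lia|].
    destruct (block_inv m) as [_ [_ HS]].
    assert (HQ : 1 <= 2 ^ (2 ^ m)) by (apply pow_R1_Rle; lra).
    set (Q := 2 ^ (2 ^ m)) in *.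
    assert (Hq : IZR (qZ (S m)) = Q + 1) by (rewrite qZ_S, plus_IZR, IZR_pow2; reflexivity).
    assert (HP : IZR (prodZ (S m)) = Q * prodR m / 2) by (pose proof (IZR_prodZ m) as Z; fold Q in Z; lra).
    assert (H3 : tau_j (S m) = 1 - IZR (prodZ (S m)) / IZR (qZ (S m))).
    { rewrite tau_block. fold Q. rewrite Hq, HP.
      replace (Sv (block_aux m) false) with (1 - prodR m / 2) by lra.
      field. lra. }
    split; [|split; [|split]].
    + rewrite H3. unfold pZ. rewrite minus_IZR. field. lra.
    + apply Zgcd_1_rel_prime. apply bezout_rel_prime.
      destruct (rel_prime_bezout _ _ (coprime_prod m)) as [u v Huv].
      apply Bezout_intro with (u := (- u)%Z) (v := (v + u)%Z). unfold pZ. lia.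
    + exact H3.
    + rewrite H3, Hq, HP, prodR_S. fold Q.
      replace (2 ^ (2 ^ S m)) with (Q * Q) by (unfold Q; rewrite <- pow_add; f_equal; simpl; lia).
      assert (HQ2 : 2 <= Q).
      { unfold Q. replace 2 with (2 ^ 1) at 1 by ring. apply Rle_pow. lra.
        pose proof (Nat.pow_nonzero 2 m). lia. }
      field. split; [lra|split; [|lra]]. nra.
  - intros j Hj. destruct j as [|m]; [lia|].
    replace (S m - 1)%nat with m by lia.
    unfold pZ. rewrite qZ_SS, prodZ_S, qZ_S. split; ring.
Qed.

Close Scope R_scope.

Theorem mainTheorem5 :
  (forall j : nat, (1 <= j)%nat ->
     tau_j j = (IZR (pZ j) / IZR (qZ j))%R /\
     Z.gcd (pZ j) (qZ j) = 1%Z /\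
     tau_j j = (1 - IZR (prodZ j) / IZR (qZ j))%R /\
     tau_j j = (1 - prodR j / (2 * (1 - / 2 ^ (2 ^ j))))%R) /\
  pZ 1 = 2%Z /\ qZ 1 = 3%Z /\
  (forall j : nat, (1 <= j)%nat ->
     pZ (S j) = (2 + (2 ^ (2 ^ Z.of_nat (j - 1)) - 1) * pZ j)%Z /\
     qZ (S j) = (2 + (2 ^ (2 ^ Z.of_nat (j - 1)) - 1) * qZ j)%Z).
Proof. exact main_aux. Qed.
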